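(* Let $W=e^{-q}$ be the bivariate Freud weight and $\{\mathbb{P}_n\}$ an orthonormal polynomial system for it, with matrices $G^n_k$, $G_n$, $A_{n,i}$ as in the context. Then for all $n\geqslant0$ and $i,j\in\{1,2\}$, $$A_{n,i}A_{n,j}^T+A_{n-1,i}^TA_{n-1,j}=G^n_{n-2}G_{n-2}^{-1}A_{n-2,i}A_{n-1,j}-A_{n,i}A_{n+1,j}G^{n+2}_nG_n^{-1}.$$
   Context: Parameters $a_{4,0},a_{2,2},a_{0,4}\geqslant0$, $a_{2,0},a_{0,2}\in\mathbb{R}$, $a_{4,0}+a_{2,2}>0$, $a_{2,2}+a_{0,4}>0$; $q(x,y)=a_{4,0}x^4+a_{2,2}x^2y^2+a_{0,4}y^4+a_{2,0}x^2+a_{0,2}y^2$, $W=e^{-q}$, inner product $(f,g)=\iint_{\mathbb{R}^2}fgW\,dx\,dy$ (entrywise on vectors). $\mathbb{X}_n=(x^n,x^{n-1}y,\dots,y^n)^T$. An orthonormal polynomial system: column vectors $\mathbb{P}_n=(P_{n,0},\dots,P_{n,n})^T$ of linearly independent polynomials of exact total degree $n$ with $(\mathbb{P}_n,\mathbb{P}_m^T)=\delta_{nm}I_{n+1}$. Write $\mathbb{P}_n=\sum_kG^n_k\mathbb{X}_k$ with constant $(n+1)\times(k+1)$ matrices, $G_n:=G^n_n$ invertible, convention $G^n_m=0$ for $m<0$ or $m>n$. $A_{n,i}$ ($(n+1)\times(n+2)$) are defined by $x\mathbb{P}_n=A_{n,1}\mathbb{P}_{n+1}+A_{n-1,1}^T\mathbb{P}_{n-1}$,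 $y\mathbb{P}_n=A_{n,2}\mathbb{P}_{n+1}+A_{n-1,2}^T\mathbb{P}_{n-1}$, $n\geqslant0$, $\mathbb{P}_{-1}=0$; matrices $A_{m,i}$ with $m<0$ are taken to be zero. *)

(* Defs.v *)
From HB Require Import structures.
From mathcomp Require Import all_boot all_order all_algebra.
From mathcomp Require Import all_classical all_reals all_analysis.
Set Implicit Arguments. Unset Strict Implicit. Unset Printing Implicit Defensive.
Import Order.TTheory GRing.Theory Num.Theory.
Local Open Scope ring_scope.

Section FreudDefs.
Variable R : realType.

Definition freud_q (a40 a22 a04 a20 a02 : R) (z : R * R) : R :=
  a40 * z.1 ^+ 4 + a22 * z.1 ^+ 2 * z.2 ^+ 2 + a04 * z.2 ^+ 4
  + a20 * z.1 ^+ 2 + a02 * z.2 ^+ 2.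

Definition freud_W (a40 a22 a04 a20 a02 : R) (z : R * R) : R :=
  expR (- freud_q a40 a22 a04 a20 a02 z).

Definition monvec (k : nat) (z : R * R) : 'cV[R]_k.+1 :=
  \col_(i < k.+1) (z.1 ^+ (k - i) * z.2 ^+ i).

Definition opsP (G : forall n k : nat, 'M[R]_(n.+1, k.+1)) (n : nat)
  (z : R * R) : 'cV[R]_n.+1 :=
  \sum_(k < n.+1) G n k *m monvec k z.

Definition opsPprev (G : forall n k : nat, 'M[R]_(n.+1, k.+1)) (n : nat)
  (z : R * R) : 'cV[R]_n :=
  match n return 'cV[R]_n with
  | 0 => 0
  | m.+1 => opsP G m z
  end.

Definition Aprev (A : forall n : nat, 'M[R]_(n.+1, n.+2)) (n : nat)
  : 'M[R]_(n, n.+1) :=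
  match n return 'M[R]_(n, n.+1) with
  | 0 => 0
  | m.+1 => A m
  end.

(* the term G^n_{n-2} G_{n-2}^{-1} A_{n-2,i} A_{n-1,j}, which is 0 for n < 2
   (convention G^n_m = 0 for m < 0) *)
Definition lowTerm (G : forall n k : nat, 'M[R]_(n.+1, k.+1))
  (Ai Aj : forall n : nat, 'M[R]_(n.+1, n.+2)) (n : nat) : 'M[R]_n.+1 :=
  match n return 'M[R]_n.+1 with
  | m.+2 => G m.+2 m *m invmx (G m m) *m Ai m *m Aj m.+1
  | _ => 0
  end.

Local Open Scope ereal_scope.

Definition leb2 := ((@lebesgue_measure R) \x (@lebesgue_measure R)).

Definition orthonormal_system (W : R * R -> R)
  (G : forall n k : nat, 'M[R]_(n.+1, k.+1)) : Prop :=
  (forall n, G n n \in unitmx) /\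
  forall (n m : nat) (i : 'I_n.+1) (j : 'I_m.+1),
    leb2.-integrable setT
      (fun z => ((opsP G n z) i 0 * (opsP G m z) j 0 * W z)%R%:E) /\
    \int[leb2]_z ((opsP G n z) i 0 * (opsP G m z) j 0 * W z)%R%:E
      = ((n == m) && (nat_of_ord i == nat_of_ord j))%:R%:E.

End FreudDefs.

(* coordinate functions: index 0 <-> x (i = 1 in the paper), 1 <-> y (i = 2) *)
Definition coordf {R : realType} (i : 'I_2) (z : R * R) : R :=
  if nat_of_ord i == 0%N then z.1 else z.2.

(* Main.v *)
Require Import Defs.
From HB Require Import structures.
From mathcomp Require Import all_boot all_order all_algebra.
From mathcomp Require Import all_classical all_reals all_analysis.
From mathcomp Require Import ring.
Import Order.TTheory GRing.Theory Num.Theory.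
Local Open Scope ring_scope.

Lemma poly_vanish (R : realType) (p : {poly R}) :
  (forall t : R, p.[t] = 0) -> p = 0.
Proof.
move=> H; apply/eqP; apply/negPn/negP => p0.
have := @max_poly_roots _ p [seq i%:R | i <- iota 0 (size p)] p0.
rewrite size_map size_iota ltnn => /(_ _ _)/notF; apply.
  by apply/allP => x _; apply/rootP.
rewrite map_inj_uniq ?iota_uniq //.
by move=> a b /eqP; rewrite eqr_nat => /eqP.
Qed.

Definition mkp (R : realType) (I : finType) (deg : I -> nat) (u : I -> R) : {poly R} :=
  \sum_i u i *: 'X^(deg i).
Arguments mkp {R I}.

Lemma mkp_horner (R : realType) (I : finType) (deg : I -> nat) (u : I -> R) t :
  (mkp deg u).[t] = \sum_i u i * t ^+ deg i.
Proof.
rewrite /mkp horner_sum; apply: eq_bigr => i _.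
by rewrite hornerZ hornerXn.
Qed.

Lemma mkp_coef (R : realType) (I : finType) (deg : I -> nat) (u : I -> R) d :
  (mkp deg u)`_d = \sum_(i | deg i == d) u i.
Proof.
rewrite /mkp coef_sum [RHS]big_mkcond /=; apply: eq_bigr => i _.
by rewrite coefZ coefXn eq_sym; case: eqP => _; rewrite ?mulr1 ?mulr0.
Qed.

Lemma ray4 (R : realType) p (I1 I2 I3 I4 : finType)
  (d1 : I1 -> nat) (d2 : I2 -> nat) (d3 : I3 -> nat) (d4 : I4 -> nat)
  (u1 : I1 -> 'cV[R]_p) (u2 : I2 -> 'cV[R]_p) (u3 : I3 -> 'cV[R]_p) (u4 : I4 -> 'cV[R]_p) :
  (forall t : R, \sum_i t ^+ d1 i *: u1 i + \sum_i t ^+ d2 i *: u2 i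
      + \sum_i t ^+ d3 i *: u3 i + \sum_i t ^+ d4 i *: u4 i = 0) ->
  forall d, \sum_(i | d1 i == d) u1 i + \sum_(i | d2 i == d) u2 i
      + \sum_(i | d3 i == d) u3 i + \sum_(i | d4 i == d) u4 i = 0.
Proof.
move=> H d; apply/matrixP => r c; rewrite !mxE !summxE.
set q := mkp d1 (fun i => u1 i r c) + mkp d2 (fun i => u2 i r c)
  + mkp d3 (fun i => u3 i r c) + mkp d4 (fun i => u4 i r c).
have q0 : q = 0.
  apply: poly_vanish => t; move/matrixP: (H t) => /(_ r c).
  rewrite !mxE !summxE /q !hornerD !mkp_horner => H0; apply: etrans _ H0.
  by congr (_ + _ + _ + _); apply: eq_bigr => i _; rewrite mxE mulrC.
by move: (congr1 (fun q : {poly R} => q`_d) q0); rewrite /q !coefD !mkp_coef coef0.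
Qed.
Lemma monvec_scale (R : realType) k (t : R) (z : R * R) :
  monvec k (t * z.1, t * z.2) = t ^+ k *: monvec k z.
Proof.
apply/matrixP => i j; rewrite !mxE /= !exprMn.
by rewrite mulrACA -exprD subnK; last exact: (ltn_ord i).
Qed.

Lemma opsP_scale (R : realType) (G : forall n k : nat, 'M[R]_(n.+1, k.+1)) n (t : R) z :
  opsP G n (t * z.1, t * z.2) = \sum_(k < n.+1) t ^+ k *: (G n k *m monvec k z).
Proof.
by apply: eq_bigr => k _; rewrite monvec_scale scalemxAr.
Qed.

Lemma monvec_indep (R : realType) p n (C : 'M[R]_(p, n.+1)) :
  (forall z, C *m monvec n z = 0) -> C = 0.
Proof.
move=> H; apply/matrixP => r c0; rewrite mxE.
pose q := mkp (fun c : 'I_n.+1 => (n - c)%N) (fun c => C r c).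
have q0 : q = 0.
  apply: poly_vanish => s; rewrite mkp_horner.
  move/matrixP: (H (s, 1)) => /(_ r ord0); rewrite !mxE => H0.
  apply: etrans _ H0; apply: eq_bigr => c _; rewrite /monvec mxE /= expr1n mulr1 //.
have := congr1 (fun q : {poly R} => q`_(n - c0)%N) q0.
rewrite mkp_coef coef0 (big_pred1 c0) // => c /=.
by rewrite eqn_sub2lE; [ | exact: (ltn_ord c) | exact: (ltn_ord c0)].
Qed.

Lemma zm3 (V: zmodType) (x y z : V) : x + y + z - x - y - z = 0.
Proof. by rewrite [x + y]addrC (addrAC y x z) addrK [y + z]addrC addrK subrr. Qed.
Lemma zm3' (V: zmodType) (x y z w : V) : x - y - z - w = 0 -> x = y + z + w.
Proof. by move=> E; apply/eqP; rewrite -subr_eq0 !opprD !addrA E. Qed.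

Lemma ray4eq (R : realType) p (I1 I2 I3 I4 : finType)
  (d1 : I1 -> nat) (d2 : I2 -> nat) (d3 : I3 -> nat) (d4 : I4 -> nat)
  (u1 : I1 -> 'cV[R]_p) (u2 : I2 -> 'cV[R]_p) (u3 : I3 -> 'cV[R]_p) (u4 : I4 -> 'cV[R]_p) :
  (forall t : R, \sum_i t ^+ d1 i *: u1 i = \sum_i t ^+ d2 i *: u2 i
      + \sum_i t ^+ d3 i *: u3 i + \sum_i t ^+ d4 i *: u4 i) ->
  forall d, \sum_(i | d1 i == d) u1 i = \sum_(i | d2 i == d) u2 i
      + \sum_(i | d3 i == d) u3 i + \sum_(i | d4 i == d) u4 i.
Proof.
move=> H d.
apply: zm3'; rewrite -!sumrN.
apply: (@ray4 R p I1 I2 I3 I4 d1 d2 d3 d4 u1 (fun i => - u2 i) (fun i => - u3 i) (fun i => - u4 i)) => t.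
rewrite (eq_bigr (fun i => - (t ^+ d2 i *: u2 i))); last by move=> i _; rewrite scalerN.
rewrite (eq_bigr (fun i => - (t ^+ d3 i *: u3 i))); last by move=> i _; rewrite scalerN.
rewrite (eq_bigr (fun i => - (t ^+ d4 i *: u4 i))); last by move=> i _; rewrite scalerN.
by rewrite !sumrN H zm3.
Qed.

Arguments ray4eq {R p I1 I2 I3 I4 d1 d2 d3 d4 u1 u2 u3 u4}.

Lemma sum_pick (V : zmodType) N d (P : pred 'I_N.+1) (F : 'I_N.+1 -> V) :
  (forall k, P k = (k == d :> nat)) -> (d <= N)%N -> \sum_(k | P k) F k = F (inord d).
Proof.
move=> HP dN; rewrite (big_pred1 (inord d)) // => k /=.
by rewrite HP -val_eqE /= inordK.
Qed.

Lemma sum_none (V : zmodType) N d (P : pred 'I_N) (F : 'I_N -> V) :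
  (forall k, P k = (k == d :> nat)) -> (N <= d)%N -> \sum_(k | P k) F k = 0.
Proof.
move=> HP dN; rewrite big_pred0 // => k; rewrite HP.
by apply/negbTE; rewrite neq_ltn (leq_trans (ltn_ord k) dN).
Qed.

Lemma coordf_scale (R : realType) i (t : R) z :
  coordf i (t * z.1, t * z.2) = t * coordf i z.
Proof. by rewrite /coordf; case: eqP. Qed.

Definition Vprev (R : realType) (G : forall n k : nat, 'M[R]_(n.+1, k.+1)) m z (k : nat)
  : 'cV[R]_m :=
  match m return 'cV[R]_m with 0 => 0 | m'.+1 => G m' k *m monvec k z end.
Arguments Vprev {R}.

Lemma opsPprev_scale (R : realType) (G : forall n k : nat, 'M[R]_(n.+1, k.+1)) m (t : R) z :
  opsPprev G m (t * z.1, t * z.2) = \sum_(k < m) t ^+ k *: Vprev G m z k.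
Proof. by case: m => [|m] /=; [rewrite big_ord0 | exact: opsP_scale]. Qed.

Lemma E1 (R : realType) (G : forall n k : nat, 'M[R]_(n.+1, k.+1))
  (A : 'I_2 -> forall n : nat, 'M[R]_(n.+1, n.+2))
  (hA : forall (i : 'I_2) (n : nat) (z : R * R),
      coordf i z *: opsP G n z
      = A i n *m opsP G n.+1 z + (Aprev (A i) n)^T *m opsPprev G n z) i m z :
  coordf i z *: (G m m *m monvec m z) = A i m *m (G m.+1 m.+1 *m monvec m.+1 z).
Proof.
pose d1 := fun k : 'I_m.+1 => k.+1.
pose u1 := fun k : 'I_m.+1 => coordf i z *: (G m k *m monvec k z).
pose d2 := fun k : 'I_m.+2 => nat_of_ord k.
pose u2 := fun k : 'I_m.+2 => A i m *m (G m.+1 k *m monvec k z).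
pose d3 := fun k : 'I_m => nat_of_ord k.
pose u3 := fun k : 'I_m => (Aprev (A i) m)^T *m Vprev G m z k.
pose d4 := fun k : 'I_0 => 0%N.
pose u4 := fun k : 'I_0 => (0 : 'cV[R]_m.+1).
have H t : \sum_i t ^+ d1 i *: u1 i = \sum_i t ^+ d2 i *: u2 i
   + \sum_i t ^+ d3 i *: u3 i + \sum_i t ^+ d4 i *: u4 i.
  rewrite big_ord0 addr0.
  have := hA i m (t * z.1, t * z.2).
  rewrite coordf_scale opsP_scale opsP_scale opsPprev_scale => E.
  apply: etrans (etrans _ E) _.
    rewrite scaler_sumr; apply: eq_bigr => k _.
    by rewrite /d1 /u1 !scalerA exprS mulrAC.
  rewrite !mulmx_sumr /d2 /u2 /d3 /u3; congr (_ + _); apply: eq_bigr => k _; by rewrite !scalemxAr.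
have := ray4eq H m.+1.
rewrite (@sum_pick _ m m) //.
rewrite (@sum_pick _ m.+1 m.+1) //.
rewrite (@sum_none _ m m.+1) //.
rewrite (@sum_none _ 0 m.+1) //; last by case.
rewrite !addr0 /u1 /u2 !inordK //.
Qed.

Lemma E2gen (R : realType) (G : forall n k : nat, 'M[R]_(n.+1, k.+1)) (i j : 'I_2) n
  (C1 : 'M[R]_(n.+1, n.+3)) (M : 'M[R]_n.+1) q (T : R * R -> 'cV[R]_n.+1)
  (y : R * R -> nat -> 'cV[R]_n.+1) :
  (q <= n)%N -> (forall t z, T (t * z.1, t * z.2) = \sum_(k < q) t ^+ k *: y z k) ->
  (forall z, coordf j z *: (coordf i z *: opsP G n z)
     = C1 *m opsP G n.+2 z + M *m opsP G n z + T z) ->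
  forall z, \sum_(k < n.+1 | k.+2 == n) coordf j z *: (coordf i z *: (G n k *m monvec k z))
    = C1 *m (G n.+2 n *m monvec n z) + M *m (G n n *m monvec n z).
Proof.
move=> qn hT hE z.
pose d1 := fun k : 'I_n.+1 => k.+2.
pose u1 := fun k : 'I_n.+1 => coordf j z *: (coordf i z *: (G n k *m monvec k z)).
pose d2 := fun k : 'I_n.+3 => nat_of_ord k.
pose u2 := fun k : 'I_n.+3 => C1 *m (G n.+2 k *m monvec k z).
pose d3 := fun k : 'I_n.+1 => nat_of_ord k.
pose u3 := fun k : 'I_n.+1 => M *m (G n k *m monvec k z).
pose d4 := fun k : 'I_q => nat_of_ord k.
pose u4 := fun k : 'I_q => y z k.
have H t : \sum_i t ^+ d1 i *: u1 i = \sum_i t ^+ d2 i *: u2 i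
   + \sum_i t ^+ d3 i *: u3 i + \sum_i t ^+ d4 i *: u4 i.
  have := hE (t * z.1, t * z.2).
  rewrite !coordf_scale !opsP_scale hT => E.
  apply: etrans (etrans _ E) _.
    rewrite !scaler_sumr; apply: eq_bigr => k _.
    rewrite /d1 /u1 !scalerA; congr (_ *: _); rewrite !exprS; ring.
  rewrite !mulmx_sumr /d2 /u2 /d3 /u3 /d4 /u4; congr (_ + _ + _); apply: eq_bigr => k _; by rewrite !scalemxAr.
have := ray4eq H n.
rewrite (@sum_pick _ n.+2 n) //.
rewrite (@sum_pick _ n n (fun k => d3 k == n)) //.
rewrite (@sum_none _ q n) // addr0 /u2 /u3 !inordK ?ltnS ?leqnSn ?(leqW (leqnSn n)) // => <-.
by rewrite leqW ?leqnSn.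
Qed.

Lemma finish (R : realType) (G : forall n k : nat, 'M[R]_(n.+1, k.+1)) n
  (M Lw : 'M[R]_n.+1) (C1 : 'M[R]_(n.+1, n.+3)) :
  G n n \in unitmx ->
  (forall z, Lw *m (G n n *m monvec n z)
     = C1 *m (G n.+2 n *m monvec n z) + M *m (G n n *m monvec n z)) ->
  M = Lw - C1 *m G n.+2 n *m invmx (G n n).
Proof.
move=> hU H.
have E : Lw *m G n n - C1 *m G n.+2 n - M *m G n n = 0.
  apply: monvec_indep => z; rewrite !mulmxBl -!mulmxA H.
  by rewrite [X in X - _ - _]addrC addrK subrr.
move/eqP: E; rewrite subr_eq0 => /eqP E.
by rewrite -(mulmxK hU M) -E mulmxBl mulmxK.
Qed.

Lemma low_ok (R : realType) (G : forall n k : nat, 'M[R]_(n.+1, k.+1))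
  (A : 'I_2 -> forall n : nat, 'M[R]_(n.+1, n.+2))
  (hA : forall (i : 'I_2) (n : nat) (z : R * R),
      coordf i z *: opsP G n z
      = A i n *m opsP G n.+1 z + (Aprev (A i) n)^T *m opsPprev G n z)
  (hU : forall n, G n n \in unitmx) i j m z :
  coordf j z *: (coordf i z *: (G m.+2 m *m monvec m z))
  = lowTerm G (A i) (A j) m.+2 *m (G m.+2 m.+2 *m monvec m.+2 z).
Proof.
have e1 : coordf i z *: monvec m z
    = invmx (G m m) *m (A i m *m (G m.+1 m.+1 *m monvec m.+1 z)).
  by rewrite -(@E1 _ _ _ hA) -scalemxAr mulKmx.
have e2 : coordf j z *: monvec m.+1 z
    = invmx (G m.+1 m.+1) *m (A j m.+1 *m (G m.+2 m.+2 *m monvec m.+2 z)).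
  by rewrite -(@E1 _ _ _ hA) -scalemxAr mulKmx.
rewrite !scalemxAr e1 !scalemxAr e2 mulKVmx //=.
by rewrite !mulmxA.
Qed.

Theorem proposition4p4 (R : realType) (a40 a22 a04 a20 a02 : R)
  (h40 : 0 <= a40) (h22 : 0 <= a22) (h04 : 0 <= a04)
  (h1 : 0 < a40 + a22) (h2 : 0 < a22 + a04)
  (G : forall n k : nat, 'M[R]_(n.+1, k.+1))
  (A : 'I_2 -> forall n : nat, 'M[R]_(n.+1, n.+2))
  (hG : orthonormal_system (freud_W a40 a22 a04 a20 a02) G)
  (hA : forall (i : 'I_2) (n : nat) (z : R * R),
      coordf i z *: opsP G n z
      = A i n *m opsP G n.+1 z + (Aprev (A i) n)^T *m opsPprev G n z) :
  forall (n : nat) (i j : 'I_2),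
    A i n *m (A j n)^T + (Aprev (A i) n)^T *m Aprev (A j) n
    = lowTerm G (A i) (A j) n
      - A i n *m A j n.+1 *m G n.+2 n *m invmx (G n n).
Proof.
case: hG => hU _ n i j.
case: n => [|[|m]].
- apply: (@finish _ _ _ _ _ _ (hU 0%N)) => z.
  have := @E2gen R G i j 0 (A i 0 *m A j 1)
    (A i 0 *m (A j 0)^T + (Aprev (A i) 0)^T *m Aprev (A j) 0) 0
    (fun _ => 0) (fun _ _ => 0) (leq0n _) _ _ z.
  rewrite big_pred0 // => <-; first by rewrite /= mul0mx.
    by move=> t z'; rewrite big_ord0.
  move=> z'; rewrite hA /= mulmx0 addr0 scalemxAr hA /=.
  by rewrite mulmxDr !mulmxA !addr0.
- apply: (@finish _ _ _ _ _ _ (hU 1%N)) => z.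
  have := @E2gen R G i j 1 (A i 1 *m A j 2)
    (A i 1 *m (A j 1)^T + (Aprev (A i) 1)^T *m Aprev (A j) 1) 0
    (fun _ => 0) (fun _ _ => 0) (leq0n _) _ _ z.
  rewrite big_pred0 // => <-; first by rewrite /= mul0mx.
    by move=> t z'; rewrite big_ord0.
  move=> z'; rewrite hA /= scalerDr !scalemxAr !hA /=.
  by rewrite mulmx0 addr0 !mulmxDr !mulmxA mulmxDl !addrA addr0.
- apply: (@finish _ _ _ _ _ _ (hU m.+2)) => z.
  pose C3 := (A i m.+1)^T *m (A j m)^T.
  have hT : forall (t : R) z', C3 *m opsP G m (t * z'.1, t * z'.2)
      = \sum_(k < m.+1) t ^+ k *: (C3 *m (G m k *m monvec k z')).
    by move=> t z'; rewrite opsP_scale mulmx_sumr; apply: eq_bigr => k _; rewrite !scalemxAr.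
  have hE : forall z', coordf j z' *: (coordf i z' *: opsP G m.+2 z')
     = A i m.+2 *m A j m.+3 *m opsP G m.+4 z' +
    (A i m.+2 *m (A j m.+2)^T + (Aprev (A i) m.+2)^T *m Aprev (A j) m.+2) *m opsP G m.+2 z'
     + C3 *m opsP G m z'.
    move=> z'; rewrite hA /= scalerDr !scalemxAr !hA /=.
    by rewrite !mulmxDr !mulmxA mulmxDl !addrA.
  have := @E2gen R G i j m.+2 (A i m.+2 *m A j m.+3)
    (A i m.+2 *m (A j m.+2)^T + (Aprev (A i) m.+2)^T *m Aprev (A j) m.+2) m.+1
    (fun z => C3 *m opsP G m z)
    (fun z k => C3 *m (G m k *m monvec k z)) (leqnSn _) hT hE z.
  move=> <-; rewrite (@sum_pick _ m.+2 m (fun k : 'I_m.+3 => k.+2 == m.+2)).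
  - rewrite inordK; first exact: (esym (@low_ok _ _ _ hA hU i j m z)).
    by rewrite ltnS leqW.
  - by move=> k; rewrite eqSS.
  - exact: leqW (leqnSn m).
Qed.
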